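(* Let $E,J,R,Q\in\mathbb{R}^{n\times n}$ with $J=-J^T$, $R=R^T\ge0$, $Q^TE=E^TQ\ge0$ and $\ker Q\subseteq\ker E$. Then: (a) If the pencil $sE-Q$ is regular, then $Q$ is invertible. (b) If $Q$ is invertible, then $[E,(J-R)Q]$ is stable if and only if $\ker J\cap\ker R\cap(Q\ker E)=\{0\}$.
   Context: A pencil $sE-A$ is regular if $\det(sE-A)$ is not the zero polynomial. For $E,A\in\mathbb{R}^{n\times n}$, $[E,A]$ is stable if every $x\in C^\infty(\mathbb{R},\mathbb{R}^n)$ with $\tfrac{d}{dt}Ex=Ax$ is bounded on $[0,\infty)$. $Q\ker E=\{Qx: Ex=0\}$. *)

(* Defs.v *)
From HB Require Import structures.
From mathcomp Require Import all_boot all_order all_algebra.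
From mathcomp Require Import all_classical all_reals all_analysis.
Set Implicit Arguments. Unset Strict Implicit. Unset Printing Implicit Defensive.
Import Order.TTheory GRing.Theory Num.Theory.
Import numFieldNormedType.Exports.
Local Open Scope ring_scope.

Definition regular_pencil (R : realType) (n : nat) (E A : 'M[R]_n) : Prop :=
  \det ('X *: map_mx polyC E - map_mx polyC A) != 0.

Definition smooth (R : realType) (n : nat) (x : R -> 'cV[R]_n) : Prop :=
  forall (k : nat) (t : R), derivable (iter k (@derive1 R _) x) t 1.

Definition stable (R : realType) (n : nat) (E A : 'M[R]_n) : Prop :=
  forall x : R -> 'cV[R]_n, smooth x ->
    (forall t : R, is_derive t 1 (fun s => E *m x s) (A *m x t)) ->
    exists M : R, forall t : R, 0 <= t -> `|x t| <= M.

Definition psd (R : realType) (n : nat) (M : 'M[R]_n) : Prop :=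
  forall v : 'cV[R]_n, 0 <= (v^T *m M *m v) 0 0.

(* Main.v *)
Require Import Defs.
From HB Require Import structures.
From mathcomp Require Import all_boot all_order all_algebra.
From mathcomp Require Import all_classical all_reals all_analysis.
Import Order.TTheory GRing.Theory Num.Theory.
Import numFieldNormedType.Exports.
From mathcomp Require Import ring lra.
Set Implicit Arguments. Unset Strict Implicit. Unset Printing Implicit Defensive.
Local Open Scope ring_scope.

Section Helpers.
Context {R : realType}.

Lemma entry_le_norm m n (u : 'M[R]_(m, n)) i j : `|u i j| <= `|u|.
Proof.
rewrite [leRHS]/Num.Def.normr /= mx_normrE.
exact: (le_bigmax _ (fun ij : 'I_m * 'I_n => `|u ij.1 ij.2|) (i, j)).
Qed.

Lemma norm_le_entries m n (u : 'M[R]_(m, n)) c :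
  0 <= c -> (forall i j, `|u i j| <= c) -> `|u| <= c.
Proof.
move=> c0 H; rewrite [leLHS]/Num.Def.normr /= mx_normrE.
by apply: bigmax_le => // -[i j] _; exact: H.
Qed.

Lemma mulmx_bound p q (M : 'M[R]_(p, q)) :
  exists c, 0 <= c /\ forall u : 'cV[R]_q, `|M *m u| <= c * `|u|.
Proof.
exists (\sum_i \sum_k `|M i k|); split.
  by apply: sumr_ge0 => i _; apply: sumr_ge0 => k _.
move=> u; apply: norm_le_entries.
  by apply: mulr_ge0 => //; apply: sumr_ge0 => i _; apply: sumr_ge0 => k _.
move=> i j; rewrite mxE (le_trans (ler_norm_sum _ _ _))//.

apply: (@le_trans _ _ (\sum_k `|M i k| * `|u|)).
  apply: ler_sum => k _; rewrite normrM ler_wpM2l//.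
  by rewrite (ord1 j) entry_le_norm.
rewrite -mulr_suml; apply: ler_wpM2r => //.
rewrite (bigD1 i)//= lerDl; apply: sumr_ge0 => i' _; apply: sumr_ge0 => k _.
by [].
Qed.

End Helpers.

Section H2.
Context {R : realType}.

Lemma isD_val (V : normedModType R) (f : R -> V) (t : R) (df : V) :
  is_derive t 1 f df -> 'D_1 f t = df.
Proof. by move=> H; apply: (@derive_val _ _ _ _ _ _ _ H). Qed.

Lemma isD_der (V : normedModType R) (f : R -> V) (t : R) (df : V) :
  is_derive t 1 f df -> derivable f t 1.
Proof. by move=> H; apply: (@ex_derive _ _ _ _ _ _ _ H). Qed.

Lemma is_derive_mx m n (x : R -> 'M[R]_(m, n)) (t : R) (d : 'M[R]_(m, n)) :
  (forall i j, is_derive t 1 (fun s => x s i j) (d i j)) ->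
  is_derive t 1 x d.
Proof.
move=> H.
have dx : derivable x t 1.
  by apply/derivable_mxP => i j; exact: (isD_der (H i j)).
apply: (is_derive_eq (derivableP dx)).
rewrite (derive_mx dx); apply/matrixP => i j; rewrite mxE.
exact: isD_val.
Qed.

Lemma is_derive_entry m n (x : R -> 'M[R]_(m, n)) (t : R) i j :
  derivable x t 1 -> is_derive t 1 (fun s => x s i j) ('D_1 x t i j).
Proof.
move=> dx; apply: (is_derive_eq (derivableP ((derivable_mxP x t 1).1 dx i j))).
by rewrite (derive_mx dx) mxE.
Qed.

Lemma is_derive_mulmx p m n (M : 'M[R]_(p, m)) (x : R -> 'M[R]_(m, n)) (t : R) :
  derivable x t 1 -> is_derive t 1 (fun s => M *m x s) (M *m 'D_1 x t).
Proof.
move=> dx; apply: is_derive_mx => i j.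
have -> : (fun s => (M *m x s) i j) = \sum_k (fun s => M i k *: x s k j).
  by apply/funext => s; rewrite fct_sumE mxE.
rewrite mxE; apply: is_derive_sum => k.
exact: (is_deriveZ (M i k) (is_derive_entry k j dx)).
Qed.

End H2.

Section H3.
Context {R : realType}.

Lemma dotE n (a b : 'cV[R]_n) : (a^T *m b) 0 0 = \sum_k a k 0 * b k 0.
Proof. by rewrite mxE; apply: eq_bigr => k _; rewrite mxE. Qed.

Lemma dotC n (a b : 'cV[R]_n) : (a^T *m b) 0 0 = (b^T *m a) 0 0.
Proof. by rewrite !dotE; apply: eq_bigr => k _; rewrite mulrC. Qed.

Lemma energy_derive n (P : 'M[R]_n) (y : R -> 'cV[R]_n) (t : R) :
  P^T = P -> derivable y t 1 ->
  is_derive t 1 (fun s => ((y s)^T *m P *m y s) 0 0)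
    (2 * ((y t)^T *m P *m 'D_1 y t) 0 0).
Proof.
move=> sP dy.
have dPy := is_derive_mulmx P dy.
have -> : (fun s => ((y s)^T *m P *m y s) 0 0) =
   \sum_k ((fun s => y s k 0) * (fun s => (P *m y s) k 0)).
  by apply/funext => s; rewrite fct_sumE -mulmxA dotE.
have hk : forall k, is_derive t 1 ((fun s => y s k 0) * (fun s => (P *m y s) k 0))
   (y t k 0 * (P *m 'D_1 y t) k 0 + (P *m y t) k 0 * 'D_1 y t k 0).
  move=> k.
  have h1 := is_derive_entry k 0 dy.
  have h2 := is_derive_entry k 0 (isD_der dPy).
  rewrite (isD_val dPy) in h2.
  apply: (is_derive_eq (is_deriveM h1 h2)).
  by [].
apply: (is_derive_eq (is_derive_sum hk)).
rewrite big_split /= -!dotE.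
rewrite trmx_mul sP !mulmxA.
lra.
Qed.


Lemma energy_bound n (P : 'M[R]_n) (y : R -> 'cV[R]_n) :
  P^T = P -> (forall t, derivable y t 1) ->
  (forall t, ((y t)^T *m P *m 'D_1 y t) 0 0 <= 0) ->
  forall t, 0 <= t ->
  ((y t)^T *m P *m y t) 0 0 <= ((y 0)^T *m P *m y 0) 0 0.
Proof.
move=> sP dy neg t t0.
have dV : forall s : R, is_derive s 1 (fun s => ((y s)^T *m P *m y s) 0 0)
    (2 * ((y s)^T *m P *m 'D_1 y s) 0 0).
  by move=> s; exact: energy_derive.
apply: (@ler0_derive1_nincr R (fun s => ((y s)^T *m P *m y s) 0 0) 0 t _ _ _ 0 t) => //.
- move=> s _; rewrite derive1E (isD_val (dV s)).
  by have := neg s; lra.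
- by apply: derivable_within_continuous => s _; exact: (isD_der (dV s)).
Qed.

End H3.

Section H4.
Context {R : realType}.

Lemma dot_ge0 n (a : 'cV[R]_n) : 0 <= (a^T *m a) 0 0.
Proof. by rewrite dotE; apply: sumr_ge0 => k _; rewrite -expr2 sqr_ge0. Qed.

Lemma sq_norm_le n (a : 'cV[R]_n) : `|a| ^+ 2 <= (a^T *m a) 0 0.
Proof.
set s := (a^T *m a) 0 0.
have s0 : 0 <= s by exact: dot_ge0.
have : `|a| <= Num.sqrt s.
  apply: norm_le_entries => // i j; rewrite (ord1 j).
  rewrite -sqrtr_sqr ler_sqrt // /s dotE (bigD1 i) //= -expr2 lerDl.
  by apply: sumr_ge0 => k _; rewrite -expr2 sqr_ge0.
move=> h; rewrite -(sqr_sqrtr s0); apply: lerXn2r => //;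
  rewrite ?nnegrE //; exact: sqrtr_ge0.
Qed.

Lemma dot_eq0 n (a : 'cV[R]_n) : (a^T *m a) 0 0 = 0 -> a = 0.
Proof.
move=> h; have := sq_norm_le a; rewrite h => h2.
apply: mx_norm_eq0; apply/eqP; rewrite -sqrf_eq0 eq_le h2 /= sqr_ge0 //.
Qed.

Lemma dot_bound n (a b : 'cV[R]_n) :
  `|(a^T *m b) 0 0| <= n%:R * `|a| * `|b|.
Proof.
rewrite dotE (le_trans (ler_norm_sum _ _ _)) //.
apply: (@le_trans _ _ (\sum_(k < n) `|a| * `|b|)).
  apply: ler_sum => k _; rewrite normrM; apply: ler_pM => //.
    by rewrite entry_le_norm.
  by rewrite entry_le_norm.
by rewrite sumr_const card_ord -mulrA mulr_natl.
Qed.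

Lemma scalar_tr n (a b : 'cV[R]_n) (M : 'M[R]_n) :
  (b^T *m M *m a) 0 0 = (a^T *m M^T *m b) 0 0.
Proof.
have h : forall X : 'M[R]_1, X 0 0 = X^T 0 0 by move=> X; rewrite mxE.
by rewrite h !trmx_mul trmxK mulmxA.
Qed.

Lemma BlD n (P : 'M[R]_n) (u1 u2 v : 'cV[R]_n) :
  ((u1 + u2)^T *m P *m v) 0 0 = (u1^T *m P *m v) 0 0 + (u2^T *m P *m v) 0 0.
Proof. by rewrite linearD /= !mulmxDl [LHS]mxE. Qed.
Lemma BrD n (P : 'M[R]_n) (u v1 v2 : 'cV[R]_n) :
  (u^T *m P *m (v1 + v2)) 0 0 = (u^T *m P *m v1) 0 0 + (u^T *m P *m v2) 0 0.
Proof. by rewrite !mulmxDr [LHS]mxE. Qed.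
Lemma BlZ n (P : 'M[R]_n) (l : R) (u v : 'cV[R]_n) :
  ((l *: u)^T *m P *m v) 0 0 = l * (u^T *m P *m v) 0 0.
Proof. by rewrite linearZ /= -!scalemxAl [LHS]mxE. Qed.
Lemma BrZ n (P : 'M[R]_n) (l : R) (u v : 'cV[R]_n) :
  (u^T *m P *m (l *: v)) 0 0 = l * (u^T *m P *m v) 0 0.
Proof. by rewrite -!scalemxAr [LHS]mxE. Qed.

Lemma psd_CS n (P : 'M[R]_n) (a b : 'cV[R]_n) :
  P^T = P -> psd P ->
  ((a^T *m P *m b) 0 0) ^+ 2 <= (a^T *m P *m a) 0 0 * (b^T *m P *m b) 0 0.
Proof.
move=> sP hP.
set al := (a^T *m P *m a) 0 0; set be := (a^T *m P *m b) 0 0.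
set ga := (b^T *m P *m b) 0 0.
have hq : forall l : R, 0 <= al + 2 * l * be + l ^+ 2 * ga.
  move=> l; have := hP (a + l *: b).
  rewrite !(BlD, BrD, BlZ, BrZ) -/al -/be -/ga.
  have -> : (b^T *m P *m a) 0 0 = be by rewrite scalar_tr sP.
  move=> h; apply: (le_trans h); rewrite le_eqVlt; apply/orP; left; apply/eqP.
  ring.
have al0 : 0 <= al by exact: hP.
have ga0 : 0 <= ga by exact: hP.
have [gz|gp] := eqVneq ga 0.
  have [bz|bn] := eqVneq be 0; last first.
    exfalso; have := hq (- (al + 1) / (2 * be)).
    rewrite gz mulr0 addr0.
    have -> : 2 * (- (al + 1) / (2 * be)) * be = - (al + 1).
      by field; rewrite bn.
    lra.
  by rewrite bz gz expr0n /= mulr0.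
have gpos : 0 < ga by rewrite lt_neqAle eq_sym gp.
have := hq (- be / ga).
have -> : al + 2 * (- be / ga) * be + (- be / ga) ^+ 2 * ga = al - be ^+ 2 / ga.
  by field.
rewrite subr_ge0 ler_pdivrMr //.
Qed.

Lemma bound_P n (P : 'M[R]_n) :
  P^T = P -> psd P ->
  exists C, 0 <= C /\ forall y : 'cV[R]_n,
    `|P *m y| ^+ 2 <= C * (y^T *m P *m y) 0 0.
Proof.
move=> sP hP.
have [c1 [c10 hc1]] := mulmx_bound P.
exists (n%:R * c1); split; first by apply: mulr_ge0.
move=> y; set u := P *m y.
set s := (u^T *m u) 0 0.
have hs : `|u| ^+ 2 <= s by exact: sq_norm_le.
have s0 : 0 <= s by exact: dot_ge0.
have qy0 : 0 <= (y^T *m P *m y) 0 0 by exact: hP.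
have hcs := psd_CS u y sP hP.
have e1 : (u^T *m P *m y) 0 0 = s by rewrite /s -mulmxA.
rewrite e1 in hcs.
have hqu : (u^T *m P *m u) 0 0 <= n%:R * c1 * s.
  rewrite -mulmxA; apply: (le_trans (ler_norm _)).
  apply: (le_trans (dot_bound _ _)).
  have := hc1 u; have nu0 : 0 <= `|u| by [].
  move=> h.
  apply: (@le_trans _ _ (n%:R * `|u| * (c1 * `|u|))).
    by apply: ler_wpM2l => //; apply: mulr_ge0.
  have -> : n%:R * `|u| * (c1 * `|u|) = n%:R * c1 * (`|u| ^+ 2) by ring.
  by apply: ler_wpM2l => //; apply: mulr_ge0.
apply: (le_trans hs).
have [sz|sp] := eqVneq s 0.
  by rewrite sz; apply: mulr_ge0 => //; apply: mulr_ge0.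
have spos : 0 < s by rewrite lt_neqAle eq_sym sp.
have h2 : s ^+ 2 <= n%:R * c1 * s * (y^T *m P *m y) 0 0.
  apply: (le_trans hcs); apply: ler_wpM2r => //.
rewrite -(ler_pM2l spos) -expr2 (le_trans h2) //.
by rewrite [X in _ <= X]mulrCA mulrA.
Qed.

Lemma inj_bound n (P A : 'M[R]_n) :
  (forall v : 'cV[R]_n, P *m v = 0 -> A *m v = 0 -> v = 0) ->
  exists C, 0 <= C /\ forall v : 'cV[R]_n, `|v| <= C * (`|P *m v| + `|A *m v|).
Proof.
move=> inj.
set G := P^T *m P + A^T *m A.
have sG : G^T = G by rewrite /G linearD /= !trmx_mul !trmxK.
have Gu : G \in unitmx.
  rewrite unitmxE unitfE; apply/negP => /det0P [v vn0 vG].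
  have Gw : G *m v^T = 0 by rewrite -sG -trmx_mul vG linear0.
  have hdot : ((v^T)^T *m (G *m v^T)) 0 0 = 0 by rewrite Gw mulmx0 mxE.
  have gram : forall (M : 'M[R]_n) (w : 'cV[R]_n),
      w^T *m (M^T *m M *m w) = (M *m w)^T *m (M *m w).
    by move=> M w; rewrite trmx_mul !mulmxA.
  rewrite /G mulmxDl mulmxDr [LHS]mxE !gram in hdot.
  have hp := dot_ge0 (P *m v^T); have ha := dot_ge0 (A *m v^T).
  have h1 : ((P *m v^T)^T *m (P *m v^T)) 0 0 = 0 by lra.
  have h2 : ((A *m v^T)^T *m (A *m v^T)) 0 0 = 0 by lra.
  have := inj _ (dot_eq0 h1) (dot_eq0 h2).
  by move=> /(congr1 trmx); rewrite trmxK linear0 => v0; rewrite v0 eqxx in vn0.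
have [c0 [c00 hc0]] := mulmx_bound (invmx G).
have [c2 [c20 hc2]] := mulmx_bound P^T.
have [c3 [c30 hc3]] := mulmx_bound A^T.
exists (c0 * (c2 + c3)); split; first by apply: mulr_ge0 => //; apply: addr_ge0.
move=> v.
have hv : v = invmx G *m (P^T *m (P *m v) + A^T *m (A *m v)).
  by rewrite !mulmxA -mulmxDl -/G mulKmx.
rewrite {1}hv.
apply: (le_trans (hc0 _)).
have hz := ler_normD (P^T *m (P *m v)) (A^T *m (A *m v)).
have := hc2 (P *m v); have := hc3 (A *m v).
have n1 : 0 <= `|P *m v| by []. have n2 : 0 <= `|A *m v| by [].
move=> h3 h2.
apply: (@le_trans _ _ (c0 * (c2 * `|P *m v| + c3 * `|A *m v|))).
  apply: ler_wpM2l => //; apply: (le_trans hz); exact: lerD.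
rewrite -mulrA; apply: ler_wpM2l => //.
have := mulr_ge0 c20 n2; have := mulr_ge0 c30 n1; nra.
Qed.

End H4.

Section H5.
Context {R : realType}.

Lemma partA n (E Q : 'M[R]_n) :
  (forall v : 'cV[R]_n, Q *m v = 0 -> E *m v = 0) ->
  regular_pencil E Q -> Q \in unitmx.
Proof.
move=> kerQE reg; rewrite unitmxE unitfE; apply/negP => /eqP dQ.
have /det0P [w wn0 wQ] : \det Q^T == 0 by rewrite det_tr dQ.
set v := w^T.
have Qv : Q *m v = 0 by rewrite -[Q]trmxK -trmx_mul wQ linear0.
have Ev := kerQE _ Qv.
move: reg; rewrite /regular_pencil.
set M := ('X *: map_mx polyC E - map_mx polyC Q).
have MV : M *m map_mx polyC v = 0.
  rewrite /M mulmxBl -scalemxAl -!map_mxM Ev Qv !map_mx0 scaler0 subr0 //.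
have : \det M *: map_mx polyC v = 0.
  by rewrite -mul_scalar_mx -mul_adj_mx -mulmxA MV mulmx0.
have [i vi] : exists i, v i 0 != 0.
  case: (boolP [exists i, v i 0 != 0]) => [/existsP//|].
  rewrite negb_exists => /forallP h; exfalso.
  have v0 : v = 0.
    apply/matrixP => i j; rewrite (ord1 j); have := h i; rewrite negbK => /eqP ->.
    by rewrite mxE.
  by move: wn0; rewrite -[w]trmxK -/v v0 linear0 eqxx.
have wi : w 0 i != 0 by move: vi; rewrite mxE.
move=> /matrixP /(_ i 0); rewrite !mxE => /eqP.
by rewrite mulf_eq0 polyC_eq0 (negbTE wi) orbF => /eqP ->; rewrite eqxx.
Qed.


Lemma lin_derive n (w : 'cV[R]_n) (t : R) : is_derive t 1 (fun s : R => s *: w) w.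
Proof.
apply: is_derive_mx => i j.
have -> : (fun s : R => (s *: w) i j) = (fun s => w i j *: s).
  by apply/funext => s; rewrite mxE mulrC.
by apply: (is_derive_eq (is_deriveZ (w i j) (is_derive_id t 1))); rewrite /GRing.scale /= mulr1.
Qed.

Lemma lin_smooth n (w : 'cV[R]_n) : smooth (fun s : R => s *: w).
Proof.
have d1 : derive1 (fun s : R => s *: w) = cst w.
  by apply/funext => t; rewrite derive1E (isD_val (lin_derive w t)).
have hk : forall k, exists c, iter k.+1 (@derive1 R _) (fun s : R => s *: w) = cst c.
  elim=> [|k [c IH]]; first by exists w.
  exists 0; rewrite iterS IH; apply/funext => t; exact: derive1_cst.
move=> [|k] t; first exact: (isD_der (lin_derive w t)).
by have [c ->] := hk k; exact: derivable_cst.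
Qed.

Lemma partB1 n (E J Rm Q : 'M[R]_n) :
  stable E ((J - Rm) *m Q) ->
  forall v : 'cV[R]_n, J *m v = 0 -> Rm *m v = 0 ->
  (exists w : 'cV[R]_n, E *m w = 0 /\ v = Q *m w) -> v = 0.
Proof.
move=> st v Jv Rv [w [Ew vQ]].
suff w0 : w = 0 by rewrite vQ w0 mulmx0.
have [M HM] : exists M : R, forall t : R, 0 <= t -> `|t *: w| <= M.
  apply: (st (fun s => s *: w) (@lin_smooth _ w)).
  move=> t.
  have -> : (fun s : R => E *m (s *: w)) = cst 0.
    by apply/funext => s; rewrite -scalemxAr Ew scaler0.
  have -> : (J - Rm) *m Q *m (t *: w) = 0.
    by rewrite -scalemxAr -mulmxA -vQ mulmxBl Jv Rv subr0 scaler0.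
  exact: is_derive_cst.
have [//|wn0] := eqVneq w 0; exfalso.
have wp : 0 < `|w| by rewrite normr_gt0.
have t0 : 0 <= (`|M| + 1) / `|w| by apply: divr_ge0 => //; apply: addr_ge0.
have := HM _ t0; rewrite normrZ ger0_norm // divfK ?gt_eqF //.
have := ler_norm M; lra.
Qed.

Lemma skew_form n (J : 'M[R]_n) (z : 'cV[R]_n) : J^T = - J ->
  (z^T *m J *m z) 0 0 = 0.
Proof.
move=> sJ; have h := scalar_tr z z J; rewrite sJ mulmxN mulNmx [X in _ = X]mxE in h.
lra.
Qed.


Lemma diss_form n (J Rm : 'M[R]_n) (z : 'cV[R]_n) : J^T = - J -> psd Rm ->
  (z^T *m (J - Rm) *m z) 0 0 = - (z^T *m Rm *m z) 0 0.
Proof.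
move=> sJ _; rewrite mulmxBr mulmxBl [LHS]mxE (skew_form z sJ) add0r.
by rewrite mxE.
Qed.

Lemma psd_ker n (Rm : 'M[R]_n) (z : 'cV[R]_n) : Rm^T = Rm -> psd Rm ->
  (z^T *m Rm *m z) 0 0 = 0 -> Rm *m z = 0.
Proof.
move=> sR pR hz.
have := psd_CS (Rm *m z) z sR pR; rewrite hz mulr0.
have -> : ((Rm *m z)^T *m Rm *m z) 0 0 = ((Rm *m z)^T *m (Rm *m z)) 0 0.
  by rewrite mulmxA.
move=> h; apply: dot_eq0; apply/eqP; rewrite -sqrf_eq0 eq_le h sqr_ge0.
by [].
Qed.

Lemma sqrt_bound (a b : R) : 0 <= a -> a ^+ 2 <= b -> a <= Num.sqrt b.
Proof.
move=> a0 h; rewrite -(ger0_norm a0) -sqrtr_sqr ler_sqrt //.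
by apply: (le_trans _ h); rewrite sqr_ge0.
Qed.

Lemma partB2 n (E J Rm Q : 'M[R]_n) :
  J^T = - J ->
  Rm^T = Rm -> psd Rm ->
  Q^T *m E = E^T *m Q -> psd (Q^T *m E) ->
  Q \in unitmx ->
  (forall v : 'cV[R]_n, J *m v = 0 -> Rm *m v = 0 ->
        (exists w : 'cV[R]_n, E *m w = 0 /\ v = Q *m w) -> v = 0) ->
  stable E ((J - Rm) *m Q).
Proof.
move=> sJ sR pR sQE pP Qu cond; rewrite /stable => x sm hder.
set P := Q^T *m E.
set A := Q^T *m (J - Rm) *m Q.
have sP : P^T = P by rewrite /P trmx_mul trmxK sQE.
have dx : forall t : R, derivable x t 1 by move=> t; exact: (sm 0%N t).
set x' := fun t => 'D_1 x t.
have dx' : forall t : R, derivable x' t 1.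
  move=> t; have := sm 1%N t.
  have -> : iter 1 (@derive1 R _) x = x' by apply/funext => s; rewrite /= derive1E.
  by [].
have Ex' : forall t, E *m x' t = (J - Rm) *m Q *m x t.
  move=> t; rewrite /x' -(isD_val (is_derive_mulmx E (dx t))).
  exact: isD_val (hder t).
have Ex'' : forall t, E *m 'D_1 x' t = (J - Rm) *m Q *m x' t.
  move=> t; rewrite -(isD_val (is_derive_mulmx E (dx' t))).
  have -> : (fun s => E *m x' s) = (fun s => (J - Rm) *m Q *m x s).
    by apply/funext => s; exact: Ex'.
  exact: isD_val (is_derive_mulmx _ (dx t)).
have neg : forall (y : 'cV[R]_n) (y' : 'cV[R]_n), E *m y' = (J - Rm) *m Q *m y ->
    (y^T *m P *m y') 0 0 <= 0.
  move=> y y' hy.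
  have -> : y^T *m P *m y' = (Q *m y)^T *m (J - Rm) *m (Q *m y).
    by rewrite /P trmx_mul -!mulmxA hy !mulmxA.
  rewrite diss_form // oppr_le0; exact: pR.
have en1 := energy_bound sP dx (fun t => neg _ _ (Ex' t)).
have en2 := energy_bound sP dx' (fun t => neg _ _ (Ex'' t)).
have [C [C0 hC]] := bound_P sP pP.
have inj : forall v : 'cV[R]_n, P *m v = 0 -> A *m v = 0 -> v = 0.
  move=> v Pv Av.
  have Ev : E *m v = 0.
    have Qtu : Q^T \in unitmx by rewrite unitmx_tr.
    by rewrite -(mulKmx Qtu (E *m v)) (mulmxA Q^T) -/P Pv mulmx0.
  have Av' : (J - Rm) *m (Q *m v) = 0.
    have Qtu : Q^T \in unitmx by rewrite unitmx_tr.
    have e : Q^T *m ((J - Rm) *m (Q *m v)) = A *m v by rewrite /A !mulmxA.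
    by rewrite -(mulKmx Qtu ((J - Rm) *m (Q *m v))) e Av mulmx0.
  have Rz : Rm *m (Q *m v) = 0.
    apply: psd_ker => //.
    have := diss_form (Q *m v) sJ pR; rewrite -mulmxA Av' mulmx0 mxE => h.
    lra.
  have Jz : J *m (Q *m v) = 0.
    by move: Av'; rewrite mulmxBl Rz subr0.
  have z0 := cond _ Jz Rz (ex_intro _ v (conj Ev erefl)).
  by rewrite -(mulKmx Qu v) z0 mulmx0.
have [K [K0 hK]] := inj_bound inj.
exists (K * (Num.sqrt (C * ((x 0)^T *m P *m x 0) 0 0)
          + Num.sqrt (C * ((x' 0)^T *m P *m x' 0) 0 0))).
move=> t t0.
apply: (le_trans (hK (x t))).
have PxA : P *m x' t = A *m x t by rewrite /P /A -mulmxA Ex' !mulmxA.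
have b1 : `|P *m x t| <= Num.sqrt (C * ((x 0)^T *m P *m x 0) 0 0).
  apply: sqrt_bound => //; apply: (le_trans (hC _)); apply: ler_wpM2l => //.
  exact: en1.
have b2 : `|A *m x t| <= Num.sqrt (C * ((x' 0)^T *m P *m x' 0) 0 0).
  rewrite -PxA; apply: sqrt_bound => //; apply: (le_trans (hC _)); apply: ler_wpM2l => //.
  exact: en2.
by apply: ler_wpM2l => //; apply: lerD.
Qed.

End H5.

Theorem proposition4 (R : realType) (n : nat) (E J Rm Q : 'M[R]_n) :
  J^T = - J ->
  Rm^T = Rm -> psd Rm ->
  Q^T *m E = E^T *m Q -> psd (Q^T *m E) ->
  (forall v : 'cV[R]_n, Q *m v = 0 -> E *m v = 0) ->
  (regular_pencil E Q -> Q \in unitmx) /\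
  (Q \in unitmx ->
    (stable E ((J - Rm) *m Q) <->
     (forall v : 'cV[R]_n, J *m v = 0 -> Rm *m v = 0 ->
        (exists w : 'cV[R]_n, E *m w = 0 /\ v = Q *m w) -> v = 0))).
Proof.
move=> sJ sR pR sQE pP kerQE; split.
  exact: partA.
move=> Qu; split.
  exact: partB1.
exact: partB2.
Qed.
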